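(* Let $G$ be a graph and $v\in V(G)$. Then \[ |M_{G-v}|+\alpha(v;G)\le |M_G|\le |M_{G-v}|+\sum_{p\in N(v)}|M_{G-(N[v]\cup N[p])}|. \] Furthermore, equality holds in the first inequality if and only if $\beta(v;G)=\varphi(v;G)$, and equality holds in the second inequality if and only if $\varphi(v;G)=0$.
   Context: Graphs are finite, simple, undirected. An induced matching is a matching whose endpoints induce a $1$-regular subgraph; it is maximal if not properly contained in another induced matching; $M_G$ is the set of maximal induced matchings of $G$ (a graph with no edges has exactly one, the empty matching). For $S\subseteq V(G)$, $G-S$ is the subgraph induced by $V(G)\setminus S$. $M_G(\emptyset,\{v\})$ is the set of maximal induced matchings of $G$ covering $v$. $\alpha(v;G)$ is the number of $M\in M_G(\emptyset,\{v\})$ such that removing from $M$ the edge incident with $v$ yields an induced matching that is not maximal in $G-v$; $\beta(v;G)$ is the number of $M\in M_G(\emptyset,\{v\})$ such that removing the edge incident with $v$ yields a maximal induced matching of $G-v$. $\varphi(v;G)$ is the number of maximal induced matchings of $G-v$ that are not maximal induced matchings of $G$. *)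

(* Defs.v *)
(* A finite simple graph is a symmetric irreflexive relation
   e on a finType T; V(G) = T. Induced subgraphs G[S] are given by vertex sets
   S : {set T}; in particular G - X is the induced subgraph on ~: X. *)
From mathcomp Require Import all_boot.
Set Implicit Arguments. Unset Strict Implicit. Unset Printing Implicit Defensive.

Section Graphs.
Variables (T : finType) (e : rel T).

Definition is_edge (S : {set T}) (f : {set T}) : bool :=
  [exists x, exists y, [&& x \in S, y \in S, e x y & f == [set x; y]]].

Definition is_matching (S : {set T}) (M : {set {set T}}) : bool :=
  [forall f in M, is_edge S f] &&
  [forall f in M, forall g in M, (f != g) ==> [disjoint f & g]].

(* induced matching: the endpoints (cover M) induce a 1-regular subgraph *)
Definition is_induced_matching (S : {set T}) (M : {set {set T}}) : bool :=
  is_matching S M &&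
  [forall u in cover M, #|[set w in cover M | e u w]| == 1].

Definition is_maximal_im (S : {set T}) (M : {set {set T}}) : bool :=
  is_induced_matching S M &&
  [forall M' : {set {set T}}, (M \proper M') ==> ~~ is_induced_matching S M'].

Definition MIM (S : {set T}) : {set {set {set T}}} := [set M | is_maximal_im S M].

Definition drop_at (v : T) (M : {set {set T}}) : {set {set T}} :=
  M :\: [set f in M | v \in f].

Definition alpha (S : {set T}) (v : T) : nat :=
  #|[set M in MIM S | (v \in cover M) && ~~ is_maximal_im (S :\ v) (drop_at v M)]|.

Definition beta (S : {set T}) (v : T) : nat :=
  #|[set M in MIM S | (v \in cover M) && is_maximal_im (S :\ v) (drop_at v M)]|.

Definition phi (S : {set T}) (v : T) : nat :=
  #|[set M in MIM (S :\ v) | M \notin MIM S]|.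

Definition nbhd (S : {set T}) (v : T) : {set T} := [set p in S | e v p].
Definition cnbhd (S : {set T}) (v : T) : {set T} := v |: nbhd S v.

End Graphs.

(* Main.v *)
Require Import Defs.
From mathcomp Require Import all_boot.
Set Implicit Arguments. Unset Strict Implicit. Unset Printing Implicit Defensive.

Section S.
Variables (T : finType) (e : rel T).
Hypotheses (e_sym : symmetric e) (e_irr : irreflexive e).

Lemma is_edgeP (S : {set T}) f : reflect (exists x y, [/\ x \in S, y \in S, e x y & f = [set x; y]]) (is_edge e S f).
Proof.
apply: (iffP existsP) => [[x /existsP [y /and4P [? ? ? /eqP ?]]]|[x [y [? ? ? ?]]]].
  by exists x, y.
by exists x; apply/existsP; exists y; apply/and4P; split => //; apply/eqP.
Qed.

Lemma matchingP (S : {set T}) (M : {set {set T}}) : reflect ((forall f, f \in M -> is_edge e S f) /\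
  (forall f g, f \in M -> g \in M -> f != g -> [disjoint f & g])) (is_matching e S M).
Proof.
apply: (iffP andP) => [[/forall_inP H1 /forall_inP H2]|[H1 H2]]; split => //.
- by move=> f g Hf Hg; move: (H2 f Hf) => /forall_inP /(_ g Hg) /implyP.
- by apply/forall_inP.
- by apply/forall_inP => f Hf; apply/forall_inP => g Hg; apply/implyP; apply: H2.
Qed.

Lemma same_edge (S : {set T}) (M : {set {set T}}) f g x : is_matching e S M -> f \in M -> g \in M -> x \in f -> x \in g -> f = g.
Proof.
move=> /matchingP [_ H] Hf Hg xf xg; apply/eqP; apply: contraT => ne.
by rewrite (disjointFr (H f g Hf Hg ne) xf) in xg.
Qed.

Lemma coverP' (M : {set {set T}}) u : reflect (exists2 f, f \in M & u \in f) (u \in cover M).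
Proof. rewrite /cover; apply: (iffP bigcupP) => [[f ? ?]|[f ? ?]]; by exists f. Qed.

Lemma cover_edge (S : {set T}) (M : {set {set T}}) u : is_matching e S M -> u \in cover M ->
  exists2 z, [set u; z] \in M & [&& e u z, u \in S & z \in S].
Proof.
move=> Hm /coverP' [f Hf uf]; have /matchingP [H1 _] := Hm.
move: (H1 f Hf) => /is_edgeP [x [y [xS yS exy def]]].
move: uf; rewrite def => /set2P [->|->].
  by exists y; rewrite -?def // exy xS yS.
by exists x; [rewrite setUC -def | rewrite e_sym exy xS yS].
Qed.

Definition ind (S : {set T}) (M : {set {set T}}) := is_matching e S M /\
  (forall u w, u \in cover M -> w \in cover M -> e u w -> [set u; w] \in M).

Lemma imP (S : {set T}) (M : {set {set T}}) : reflect (ind S M) (is_induced_matching e S M).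
Proof.
apply: (iffP andP) => [[Hm /forall_inP H]|[Hm H]]; split => //.
  move=> u w uc wc euw.
  have [z Hz /and3P [euz _ _]] := cover_edge Hm uc.
  have /cards1P [a Ha] := H u uc.
  have : w \in [set w in cover M | e u w] by rewrite inE wc euw.
  have : z \in [set w in cover M | e u w].
    by rewrite inE euz andbT; apply/coverP'; exists [set u; z]; rewrite ?set22.
  by rewrite Ha !inE => /eqP <- /eqP ->.
apply/forall_inP => u uc; apply/cards1P.
have [z Hz /and3P [euz _ _]] := cover_edge Hm uc.
exists z; apply/setP => w; rewrite !inE; apply/andP/eqP => [[wc euw]|->].
  have Huw := H u w uc wc euw.
  have eq := same_edge Hm Huw Hz (set21 u w) (set21 u z).
  have : w \in [set u; z] by rewrite -eq set22.
  case/set2P => // wu; by rewrite wu e_irr in euw.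
by split => //; apply/coverP'; exists [set u; z]; rewrite ?set22.
Qed.


Lemma cover_sub (S : {set T}) (M : {set {set T}}) : is_matching e S M -> cover M \subset S.
Proof.
by move=> Hm; apply/subsetP => u uc; have [z _ /and3P [_ ? _]] := cover_edge Hm uc.
Qed.

Lemma cover_U1 (f : {set T}) (N : {set {set T}}) u :
  (u \in cover (f |: N)) = (u \in f) || (u \in cover N).
Proof.
apply/coverP'/orP => [[g]|[uf|/coverP' [g gN ug]]].
- by rewrite !inE => /orP [/eqP ->|gN ug]; [left|right; apply/coverP'; exists g].
- by exists f; rewrite ?setU11.
- by exists g; rewrite // !inE gN orbT.
Qed.

Lemma cover_mono (M M' : {set {set T}}) : M' \subset M -> cover M' \subset cover M.
Proof.
move=> /subsetP H; apply/subsetP => u /coverP' [g gM ug].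
by apply/coverP'; exists g => //; apply: H.
Qed.

Lemma ind_cover (S S' : {set T}) (M : {set {set T}}) :
  ind S M -> cover M \subset S' -> ind S' M.
Proof.
move=> [/matchingP [H1 H2] H3] /subsetP sub; split => //; apply/matchingP; split => //.
move=> f fM; have /is_edgeP [x [y [_ _ exy def]]] := H1 f fM.
apply/is_edgeP; exists x, y; split => //; apply: sub; apply/coverP'; exists f => //;
  by rewrite def ?set21 ?set22.
Qed.

Lemma ind_sub (S : {set T}) (M M' : {set {set T}}) : ind S M -> M' \subset M -> ind S M'.
Proof.
move=> [Hm H3] sub; have /matchingP [H1 H2] := Hm; have /subsetP s := sub.
split.
  apply/matchingP; split => [f /s|f g /s fM /s gM]; [exact: H1| exact: H2].
move=> u w uc wc euw.
have /subsetP cs := cover_mono sub.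
have Huw := H3 u w (cs u uc) (cs w wc) euw.
have /coverP' [g gM' ug] := uc.
by rewrite (same_edge Hm Huw (s g gM') (set21 u w) ug).
Qed.

Definition away v p u := [&& u != v, u != p, ~~ e v u & ~~ e p u].

Lemma ind_add (S : {set T}) (N : {set {set T}}) v p : ind S N -> v \in S -> p \in S -> e v p ->
  (forall u, u \in cover N -> away v p u) -> ind S ([set v; p] |: N).
Proof.
move=> [Hm H3] vS pS evp Haw; have /matchingP [H1 H2] := Hm.
have nvN : v \notin cover N by apply/negP => /Haw /and4P [/eqP []].
have npN : p \notin cover N by apply/negP => /Haw /and4P [_ /eqP []].
have fN : forall g, g \in N -> [disjoint [set v; p] & g].
  move=> g gN; rewrite disjoint_subset; apply/subsetP => x /set2P [->|->]; rewrite !inE;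
    apply/negP => xg; [move/negP: nvN|move/negP: npN]; apply; apply/coverP'; by exists g.
split.
  apply/matchingP; split.
    move=> f; rewrite !inE => /orP [/eqP ->|]; last exact: H1.
    by apply/is_edgeP; exists v, p.
  move=> f g; rewrite !inE => /orP [/eqP ->|fN'] /orP [/eqP ->|gN'] ne.
  - by rewrite eqxx in ne.
  - exact: fN.
  - by rewrite disjoint_sym; apply: fN.
  - exact: H2.
move=> u w; rewrite !cover_U1 => /orP [uf|uc] /orP [wf|wc] euw; rewrite !inE.
- move: uf wf euw => /set2P [] -> /set2P [] ->; rewrite ?e_irr // => _;
  by rewrite ?eqxx // setUC eqxx.
- move: uf => /set2P [] ?; subst u; have /and4P [_ _ h1 h2] := Haw w wc; by [rewrite euw in h1 | rewrite euw in h2].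
- move: wf => /set2P [] ?; subst w; have /and4P [_ _ h1 h2] := Haw u uc;
    rewrite e_sym in euw; by [rewrite euw in h1 | rewrite euw in h2].
- by rewrite H3 ?orbT.
Qed.

Lemma ind_drop (S : {set T}) (M : {set {set T}}) v p : ind S M -> [set v; p] \in M ->
  forall u, u \in cover (M :\ [set v; p]) -> away v p u.
Proof.
move=> [Hm H3] fM u /coverP' [g]; rewrite !inE => /andP [gf gM] ug.
have uc : u \in cover M by apply/coverP'; exists g.
have vc : v \in cover M by apply/coverP'; exists [set v; p]; rewrite ?set21.
have pc : p \in cover M by apply/coverP'; exists [set v; p]; rewrite ?set22.
have ne : forall x, x \in [set v; p] -> u != x.
  move=> x xf; apply/negP => /eqP ?; subst x.
  by rewrite (same_edge Hm gM fM ug xf) eqxx in gf.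
apply/and4P; split; rewrite ?ne ?set21 ?set22 //; apply/negP => h.
- have h' := H3 _ _ vc uc h; have := same_edge Hm h' fM (set21 v u) (set21 v p) => eq.
  by move: (ne u); rewrite eqxx -eq set22 => /(_ isT).
- have h' := H3 _ _ pc uc h; have := same_edge Hm h' fM (set21 p u) (set22 v p) => eq.
  by move: (ne u); rewrite eqxx -eq set22 => /(_ isT).
Qed.

Lemma maxP (S : {set T}) (M : {set {set T}}) :
  reflect (ind S M /\ forall M' : {set {set T}}, M \proper M' -> ~ ind S M') (is_maximal_im e S M).
Proof.
apply: (iffP andP) => [[/imP H /forallP H2]|[H H2]]; split; first by [].
  by move=> M' pr /imP; move: (H2 M'); rewrite pr /= => /negP.
  by apply/imP.
by apply/forallP => M'; apply/implyP => pr; apply/negP => /imP; apply: H2.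
Qed.


Variable v : T.
Local Notation G := [set: T].
Local Notation Gv := ([set: T] :\ v).

Lemma ind_G_to_Gv (M : {set {set T}}) : ind G M -> v \notin cover M -> ind Gv M.
Proof.
move=> H nv; apply: ind_cover H _; apply/subsetP => u uc; rewrite !inE andbT.
by apply: contraNneq nv => <-.
Qed.

Lemma ind_Gv_to_G (M : {set {set T}}) : ind Gv M -> ind G M.
Proof. by move=> H; apply: ind_cover H (subsetT _). Qed.

Lemma nv_cover (M : {set {set T}}) : ind Gv M -> v \notin cover M.
Proof.
move=> [Hm _]; apply/negP => /(subsetP (cover_sub Hm)); by rewrite !inE eqxx.
Qed.

Lemma drop_atE (M : {set {set T}}) g : (g \in drop_at v M) = (g \in M) && (v \notin g).
Proof. by rewrite /drop_at !inE; case: (g \in M); case: (v \in g). Qed.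

Lemma drop_sub (M : {set {set T}}) : drop_at v M \subset M.
Proof. by apply/subsetP => g; rewrite drop_atE => /andP []. Qed.

Lemma drop_nv (M : {set {set T}}) : v \notin cover (drop_at v M).
Proof. by apply/negP => /coverP' [g]; rewrite drop_atE => /andP [_ /negP]. Qed.

Lemma L1 (M : {set {set T}}) : is_maximal_im e G M -> v \notin cover M -> is_maximal_im e Gv M.
Proof.
move=> /maxP [H H2] nv; apply/maxP; split; first exact: ind_G_to_Gv.
by move=> M' pr /ind_Gv_to_G; apply: H2.
Qed.

Lemma phi_ext (M M' : {set {set T}}) : is_maximal_im e Gv M -> M \proper M' -> ind G M' ->
  [/\ is_maximal_im e G M', v \in cover M' & drop_at v M' = M].
Proof.
move=> /maxP [HM HM2] pr HM'.
have vc : v \in cover M'.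
  apply: contraT => nv; by case: (HM2 _ pr (ind_G_to_Gv HM' nv)).
have nvM := nv_cover HM.
have /properP [sub _] := pr.
have subD : M \subset drop_at v M'.
  apply/subsetP => g gM; rewrite drop_atE (subsetP sub _ gM) /=.
  by apply: contra nvM => vg; apply/coverP'; exists g.
have indD : ind Gv (drop_at v M').
  by apply: ind_G_to_Gv (drop_nv _); apply: ind_sub HM' (drop_sub _).
have eqD : drop_at v M' = M.
  apply/eqP; rewrite eq_sym eqEproper subD /=; apply/negP => pr2; by case: (HM2 _ pr2 indD).
split => //; apply/maxP; split => // M'' pr'' ind''.
have /properP [sub'' [g gM'' gM']] := pr''.
have [HM'm _] := HM'.
have /coverP' [f fM' vf] := vc.
apply: (HM2 (drop_at v M'')); last first.
  by apply: ind_G_to_Gv (drop_nv _); apply: ind_sub ind'' (drop_sub _).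
apply/properP; split.
  rewrite -eqD; apply/subsetP => h; rewrite !drop_atE => /andP [hM' ->].
  by rewrite (subsetP sub'' _ hM').
exists g.
  rewrite drop_atE gM'' /=; apply/negP => vg.
  have [HM''m _] := ind''.
  have := same_edge HM''m gM'' (subsetP sub'' _ fM') vg vf => eq.
  by rewrite eq fM' in gM'.
by apply: contra gM' => /(subsetP sub).
Qed.


Definition Hs p := [set: T] :\: (cnbhd e [set: T] v :|: cnbhd e [set: T] p).

Lemma inH p u : (u \in Hs p) = away v p u.
Proof.
rewrite /Hs /cnbhd /nbhd /away !inE /=.
by case: (u == v); case: (u == p); case: (e v u); case: (e p u).
Qed.

Lemma f_notin p (N : {set {set T}}) : ind (Hs p) N -> [set v; p] \notin N.
Proof.
move=> [Hm _]; apply/negP => fN.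
have : v \in cover N by apply/coverP'; exists [set v; p]; rewrite ?set21.
move/(subsetP (cover_sub Hm)); rewrite inH /away eqxx.
done.
Qed.

Lemma add_max p (N : {set {set T}}) : e v p -> is_maximal_im e (Hs p) N ->
  is_maximal_im e G ([set v; p] |: N).
Proof.
move=> evp /maxP [HN HN2]; have fN := f_notin HN.
have aw : forall u, u \in cover N -> away v p u.
  by move=> u /(subsetP (cover_sub HN.1)); rewrite inH.
have HG : ind G ([set v; p] |: N).
  by apply: ind_add; rewrite ?in_setT //; apply: ind_cover HN (subsetT _).
apply/maxP; split => // M'' pr ind''.
have /properP [sub [g gM'' gN]] := pr.
have fM'' : [set v; p] \in M'' by apply: (subsetP sub); rewrite setU11.
apply: (HN2 (M'' :\ [set v; p])).
  apply/properP; split.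
    apply/subsetP => h hN; rewrite !inE (subsetP sub) ?andbT; last by rewrite !inE hN orbT.
    by apply: contraNneq fN => <-.
  exists g; last by apply: contra gN => gN'; rewrite !inE gN' orbT.
  rewrite !inE gM'' andbT; by apply: contra gN => /eqP ->; rewrite setU11.
apply: ind_cover (ind_sub ind'' (subsetDl _ _)) _.
by apply/subsetP => u /(ind_drop ind'' fM''); rewrite inH.
Qed.

Lemma del_max p (M : {set {set T}}) : is_maximal_im e G M -> [set v; p] \in M ->
  is_maximal_im e (Hs p) (M :\ [set v; p]).
Proof.
move=> /maxP [HM HM2] fM.
have HD : ind (Hs p) (M :\ [set v; p]).
  apply: ind_cover (ind_sub HM (subsetDl _ _)) _.
  by apply/subsetP => u /(ind_drop HM fM); rewrite inH.
have /is_edgeP [x [y [_ _ exy def]]] : is_edge e G [set v; p].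
  by have [/matchingP [H1 _] _] := HM; apply: H1.
have evp : e v p.
  move: (set21 x y) (set22 x y) exy; rewrite -def => /set2P [] -> /set2P [] ->;
    rewrite ?e_irr //; first [done | by rewrite e_sym].
apply/maxP; split => // N'' pr ind''.
have fN'' := f_notin ind''.
have aw : forall u, u \in cover N'' -> away v p u.
  by move=> u /(subsetP (cover_sub ind''.1)); rewrite inH.
have HG : ind G ([set v; p] |: N'').
  by apply: ind_add; rewrite ?in_setT //; apply: ind_cover ind'' (subsetT _).
have /properP [sub [g gN'' gD]] := pr.
apply: (HM2 _ _ HG); apply/properP; split.
  apply/subsetP => h hM; rewrite !inE.
  case: (eqVneq h [set v; p]) => //= ne; apply: (subsetP sub); by rewrite !inE ne.
exists g; first by rewrite !inE gN'' orbT.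
apply: contra gD => gM; rewrite !inE gM andbT.
by apply: contra fN'' => /eqP <-.
Qed.


Definition Yp p := [set M in MIM e G | [set v; p] \in M].

Lemma Yp_card p : e v p -> #|Yp p| = #|MIM e (Hs p)|.
Proof.
move=> evp.
have -> : Yp p = (fun N => [set v; p] |: N) @: MIM e (Hs p).
  apply/setP => M; apply/idP/imsetP.
    rewrite !inE => /andP [HM fM]; exists (M :\ [set v; p]).
      by rewrite inE; apply: del_max.
    by rewrite setD1K.
  move=> [N]; rewrite inE => HN ->; rewrite !inE eqxx /= andbT.
  exact: add_max.
apply: card_in_imset => N1 N2; rewrite !inE => H1 H2 eq.
have [h1 _] := maxP _ _ H1; have [h2 _] := maxP _ _ H2.
by rewrite -(setU1K (f_notin h1)) eq setU1K // (f_notin h2).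
Qed.

Definition Ys := [set M in MIM e G | v \in cover M].

Lemma Ys_card : #|Ys| = \sum_(p in nbhd e G v) #|MIM e (Hs p)|.
Proof.
rewrite -sum1_card.
transitivity (\sum_(M in Ys) \sum_(p in nbhd e G v) ([set v; p] \in M : nat)).
  apply: eq_bigr => M; rewrite !inE => /andP [/maxP [[Hm _] _] vc].
  have [p0 f0 /and3P [evp0 _ _]] := cover_edge Hm vc.
  rewrite (bigD1 p0) /=; last by rewrite /nbhd !inE.
  rewrite f0 big1 // => p /andP [pN ne]; apply/eqP; rewrite eqb0; apply/negP => fp.
  have eq := same_edge Hm fp f0 (set21 v p) (set21 v p0).
  have : p \in [set v; p0] by rewrite -eq set22.
  case/set2P => [pv|pp0]; last by rewrite pp0 eqxx in ne.
  by move: pN; rewrite /nbhd !inE pv e_irr.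
rewrite exchange_big; apply: eq_bigr => p; rewrite /nbhd !inE /= => evp.
rewrite -Yp_card // -sum1_card big_mkcond [RHS]big_mkcond; apply: eq_bigr => M _.
rewrite !inE; case: (boolP ([set v; p] \in M)) => fM; rewrite ?andbT ?andbF /=; last by case: ifP.
have -> : v \in cover M by apply/coverP'; exists [set v; p]; rewrite ?set21.
by rewrite andbT.
Qed.


Definition Xs := [set M in MIM e G | v \notin cover M].

Lemma cardA : #|MIM e G| = #|Xs| + #|Ys|.
Proof.
rewrite -(cardsID [set M | v \in cover M] (MIM e G)) addnC; congr (_ + _);
  apply: eq_card => M; rewrite !inE; by case: (is_maximal_im e G M); case: (v \in cover M).
Qed.

Lemma cardY : #|Ys| = alpha e G v + beta e G v.
Proof.
rewrite -(cardsID [set M | is_maximal_im e Gv (drop_at v M)] Ys) addnC /alpha /beta;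
  congr (_ + _); apply: eq_card => M; rewrite !inE;
  by case: (is_maximal_im e G M); case: (v \in cover M); case: (is_maximal_im e Gv (drop_at v M)).
Qed.

Lemma cardB : #|MIM e Gv| = #|Xs| + phi e G v.
Proof.
rewrite -(cardsID (MIM e G) (MIM e Gv)); congr (_ + _).
apply: eq_card => M; rewrite !inE; apply/andP/andP => [[H1 H2]|[H1 H2]]; split => //.
  by apply: nv_cover; have [] := maxP _ _ H1.
  exact: L1.
rewrite /phi; apply: eq_card => M; rewrite !inE.
by case: (is_maximal_im e Gv M); case: (is_maximal_im e G M).
Qed.

Lemma phi_le_beta : phi e G v <= beta e G v.
Proof.
pose g (M : {set {set T}}) :=
  odflt M [pick M' : {set {set T}} | (M \proper M') && is_induced_matching e G M'].
have gP : forall M, M \in [set M in MIM e Gv | M \notin MIM e G] ->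
  [/\ is_maximal_im e G (g M), v \in cover (g M) & drop_at v (g M) = M].
  move=> M; rewrite !inE => /andP [HM nHM]; rewrite /g.
  case: pickP => [M' /andP [pr /imP H]|none]; first exact: phi_ext.
  exfalso; move/negP: nHM; apply; apply/maxP; split.
    by apply: ind_Gv_to_G; have [] := maxP _ _ HM.
  by move=> M' pr /imP im; move: (none M'); rewrite pr im.
rewrite /phi /beta -(card_in_imset (f := g)).
  apply: subset_leq_card; apply/subsetP => _ /imsetP [M HM ->].
  have [H1 H2 H3] := gP M HM; rewrite !inE H1 H2 H3 /=.
  by move: HM; rewrite !inE => /andP [].
move=> M1 M2 H1 H2 eq.
by have [_ _ <-] := gP M1 H1; have [_ _ <-] := gP M2 H2; rewrite eq.
Qed.

End S.

From mathcomp Require Import zify.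

Theorem proposition2p5 (T : finType) (e : rel T)
  (e_sym : symmetric e) (e_irr : irreflexive e) (v : T) :
  let G := [set: T] in
  let lhs := #|MIM e (G :\ v)| + alpha e G v in
  let rhs := #|MIM e (G :\ v)| +
             \sum_(p in nbhd e G v)
                #|MIM e (G :\: (cnbhd e G v :|: cnbhd e G p))| in
  [/\ lhs <= #|MIM e G|, #|MIM e G| <= rhs,
      (lhs = #|MIM e G| <-> beta e G v = phi e G v) &
      (#|MIM e G| = rhs <-> phi e G v = 0)].
Proof.
move=> G lhs rhs; rewrite {}/lhs {}/rhs {}/G.
have hA := cardA e v; have hB := cardB e_sym e_irr v.
have hle := phi_le_beta e_sym e_irr v.
have hY := Ys_card e_sym e_irr v.
have hY' := cardY e v.
rewrite -[\sum_(p in _) _]hY hY' hA hB.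
split; [lia|lia|split; lia|split; lia].
Qed.
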